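(* For all integers $n\ge0$ and $k\ge1$, $$\det\big(a(n+i+j+1,4k)\big)_{0\le i,j\le 2k-1}=(-1)^{k(n-1)}(2k+1)^n$$ and $$\det\big(a(n+i+j,4k-2)\big)_{0\le i,j\le 2k-1}=(-1)^{kn}2^n.$$
   Context: For integers $N,K\ge0$, $a(N,K)=\sum_{s=0}^{K}C_N^{(K)}(0\to s)$, where $C_N^{(K)}(0\to s)$ is the number of lattice paths with steps $(1,1),(1,-1)$ from $(0,0)$ to $(N,s)$ never going below the $x$-axis nor above $y=K$; i.e. $a(N,K)$ is the number of such paths of length $N$ starting at height $0$ with arbitrary end height. *)

(* Defs.v *)
From mathcomp Require Import all_boot all_order all_algebra.
Set Implicit Arguments. Unset Strict Implicit. Unset Printing Implicit Defensive.

(* A lattice path of length N with steps (1,1) (true) and (1,-1) (false),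
   starting at height h.  [walk K h s] is [Some e] when the path never
   goes below 0 nor above K, e being the final height; [None] otherwise. *)
Fixpoint walk (K h : nat) (s : seq bool) : option nat :=
  match s with
  | [::] => Some h
  | true :: s' => if h < K then walk K h.+1 s' else None
  | false :: s' => if 0 < h then walk K h.-1 s' else None
  end.

Definition Cpaths (N K s : nat) : nat :=
  #|[set p : N.-tuple bool | walk K 0 p == Some s]|.

Definition a (N K : nat) : nat := \sum_(0 <= s < K.+1) Cpaths N K s.

(* Main.v *)
Require Import Defs.
From mathcomp Require Import all_boot all_order all_algebra zify ring lra.
Import GRing.Theory.
Local Open Scope ring_scope.


Definition tent (K j h : nat) : int := (minn (minn j h) (K - h)).+1%:Z.

Fixpoint g (K N h : nat) : int :=
  match N with
  | 0 => 1
  | N'.+1 => (if h is h'.+1 then g K N' h' else 0) + (if (h < K)%N then g K N' h.+1 else 0)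
  end.

Fixpoint qc (j l : nat) : int :=
  match j with
  | 0 => (l == 0%N)%:R
  | 1 => (l == 1%N)%:R
  | (j'.+1 as j1).+1 => (if l is l'.+1 then qc j1 l' else 0) - qc j' l
  end.

Lemma qc_SS j l : qc j.+2 l = (if l is l'.+1 then qc j.+1 l' else 0) - qc j l.
Proof. by []. Qed.

Lemma qc_gt j l : (j < l)%N -> qc j l = 0.
Proof.
elim: j {-2}j (leqnn j) l => [|J IH] j hj l hl.
  by move: hj; rewrite leqn0 => /eqP ->; case: l hl.
case: j hj hl => [|[|j]] hj hl; first by case: l hl.
  by case: l hl => [|[|l]].
case: l hl => [|l] hl //.
rewrite qc_SS (IH j.+1) ?(IH j) ?subr0 //; lia.
Qed.

Lemma qc_diag j : qc j j = 1.
Proof.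
elim: j {-2}j (leqnn j) => [|J IH] j hj.
  by move: hj; rewrite leqn0 => /eqP ->.
case: j hj => [|[|j]] hj //.
rewrite qc_SS IH ?(qc_gt j) ?subr0 //; lia.
Qed.

Lemma qc_odd0 m : qc m.*2.+1 0 = 0.
Proof. by elim: m => // m IH; rewrite doubleS qc_SS IH subr0. Qed.

Lemma qc_even0 m : qc m.*2 0 = (-1) ^+ m.
Proof. by elim: m => // m IH; rewrite doubleS qc_SS IH exprS mulN1r sub0r. Qed.

Lemma qc_odd1 m : qc m.*2.+1 1 = (-1) ^+ m * m.+1%:R.
Proof.
elim: m => // m IH; rewrite doubleS qc_SS -doubleS qc_even0 IH exprS.
rewrite -[(m.+2)%:R]natr1 -[(m.+1)%:R]natr1; ring.
Qed.

Definition qs (j : nat) (f : nat -> int) (N : nat) : int :=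
  \sum_(l < j.+1) qc j l * f (N + l)%N.

Lemma qs_widen j f N M : (j < M)%N -> qs j f N = \sum_(l < M) qc j l * f (N + l)%N.
Proof.
move=> hM; rewrite /qs (big_ord_widen M (fun l => qc j l * f (N + l)%N)) //.
rewrite big_mkcond /=; apply: eq_bigr => l _; case: ifP => // /negbT.
by rewrite -leqNgt => hl; rewrite qc_gt // mul0r.
Qed.

Lemma qs_rec j f N : qs j.+2 f N = qs j.+1 f N.+1 - qs j f N.
Proof.
rewrite (@qs_widen j.+2 f N j.+3) // (@qs_widen j.+1 f N.+1 j.+2) //.
rewrite (@qs_widen j f N j.+3); last by lia.
rewrite big_ord_recl [X in _ = _ - X]big_ord_recl.
under eq_bigr do rewrite lift0 qc_SS mulrBl.
rewrite sumrB qc_SS sub0r.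
have -> : \sum_(i < j.+2) qc j.+1 i * f (N + i.+1)%N = \sum_(i < j.+2) qc j.+1 i * f (N.+1 + i)%N.
  by apply: eq_bigr => i _; rewrite addnS.
have -> : \sum_(i < j.+2) qc j (lift ord0 i) * f (N + lift ord0 i)%N = \sum_(i < j.+2) qc j i.+1 * f (N + i.+1)%N by [].
set A := \sum_(i < _) _ ; set B := \sum_(i < _) _.
rewrite addn0 mulNr; ring.
Qed.

Lemma tent_step K j h : (2 * j.+2 <= K)%N -> (h <= K)%N ->
  (if h is h'.+1 then tent K j.+1 h' else 0) + (if (h < K)%N then tent K j.+1 h.+1 else 0)
   - tent K j h = tent K j.+2 h.
Proof.
move=> hK hh; rewrite /tent; case: h hh => [|h] hh /=; case: ifP => H; lia.
Qed.

Definition isA K (V : nat -> nat -> int) := forall N h, (h <= K)%N ->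
  V N.+1 h = (if h is h'.+1 then V N h' else 0) + (if (h < K)%N then V N h.+1 else 0).

Lemma isA_g K : isA K (g K).
Proof. by []. Qed.

Lemma isA_shift K V : isA K V -> isA K (fun N h => V N.+1 h).
Proof. by move=> hV N h hh; rewrite hV. Qed.

Lemma isA_qs K V j : isA K V -> isA K (fun N h => qs j (fun M => V M h) N).
Proof.
move=> hV N h hh /=; rewrite /qs.
under eq_bigr do rewrite addSn hV // mulrDr.
rewrite big_split /=; case: h hh => [|h] hh.
  rewrite big1 ?add0r; last by move=> l _; rewrite mulr0.
  by case: ifP => // _; rewrite big1 // => l _; rewrite mulr0.
by case: ifP => // _; rewrite [X in _ + X = _]big1 ?addr0 // => l _; rewrite mulr0.
Qed.

Lemma isA_sub K V1 V2 : isA K V1 -> isA K V2 -> isA K (fun N h => V1 N h - V2 N h).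
Proof.
move=> h1 h2 N h hh /=; rewrite h1 // h2 //.
by case: h hh => [|h] hh; case: ifP => _; ring.
Qed.

Lemma isA_unique K V1 V2 : isA K V1 -> isA K V2 -> (forall h, (h <= K)%N -> V1 0%N h = V2 0%N h) ->
  forall N h, (h <= K)%N -> V1 N h = V2 N h.
Proof.
move=> h1 h2 h0; elim=> [|N IH] h hh; first exact: h0.
rewrite h1 // h2 //; case: h hh => [|h] hh; case: ifP => H; rewrite ?IH //; lia.
Qed.

Lemma qs_shift j f N : qs j f N.+1 = qs j (fun M => f M.+1) N.
Proof. by rewrite /qs; under eq_bigr do rewrite addSn. Qed.

Lemma qs0 f N : qs 0 f N = f N.
Proof. by rewrite /qs big_ord1 /= mul1r addn0. Qed.

Lemma qs1 f N : qs 1 f N = f N.+1.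
Proof. by rewrite /qs !big_ord_recl big_ord0 /= mul0r mul1r add0r addr0 addn1. Qed.

Lemma rowtr K : (0 < K)%N -> forall i V, isA K V -> (i <= K)%N ->
  qs i (fun N => V N 0%N) 0 = V 0%N i.
Proof.
move=> hK i.
suff: (forall V, isA K V -> (i <= K)%N -> qs i (fun N => V N 0%N) 0 = V 0%N i) /\
      (forall V, isA K V -> (i.+1 <= K)%N -> qs i.+1 (fun N => V N 0%N) 0 = V 0%N i.+1) by case.
elim: i => [|i [IH1 IH2]].
  split=> V hV hi; first by rewrite qs0.
  by rewrite qs1 hV // hK add0r.
split=> // V hV hi.
rewrite qs_rec qs_shift (IH2 (fun N h => V N.+1 h)) ?IH1 //; try lia; last exact: isA_shift.
rewrite /= (hV 0%N i.+1); last lia.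
by rewrite (_ : (i.+1 < K)%N) //; ring.
Qed.

Lemma tent_qs K j h : (2 * j <= K)%N -> (h <= K)%N ->
  qs j (fun M => g K M h) 0 = tent K j h.
Proof.
move: h; suff: (forall h, (2 * j <= K)%N -> (h <= K)%N -> qs j (fun M => g K M h) 0 = tent K j h) /\
  (forall h, (2 * j.+1 <= K)%N -> (h <= K)%N -> qs j.+1 (fun M => g K M h) 0 = tent K j.+1 h) by case.
elim: j => [|j [IH1 IH2]].
  split=> h hK hh; first by rewrite qs0 /tent /=; congr Posz; lia.
  rewrite qs1 /= /tent; case: h hh => [|h] hh; case: ifP => H; lia.
split=> // h hK hh.
rewrite qs_rec (@isA_qs K (g K) j.+1 (isA_g K) 0%N h hh) -(@tent_step K j h hK hh) -(IH1 h) //; last lia.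
congr (_ + _ - _).
  case: h hh => [|h] hh //; rewrite IH2 //; lia.
case: ifP => // H; rewrite IH2 //; lia.
Qed.


Definition hank p (s : nat -> int) n : 'M[int]_p := \matrix_(i < p, j < p) s (n + i + j)%N.

Lemma sum_delta p (F : nat -> int) x : (x < p)%N ->
  \sum_(l < p) F l * (l == x :> nat)%:R = F x.
Proof.
move=> hx; rewrite (bigD1 (Ordinal hx)) //= eqxx mulr1 big1 ?addr0 // => l hl.
rewrite (_ : (l == x :> nat) = false) ?mulr0 //; apply/negbTE.
by apply: contra hl => /eqP H; apply/eqP/val_inj.
Qed.

Definition compmx m (c : nat -> int) : 'M[int]_m.+1 :=
  \matrix_(l < m.+1, j < m.+1) (if (j < m)%N then (l == j.+1 :> nat)%:R else - c l).

Lemma det_compmx m c : \det (compmx m c) = (-1) ^+ m.+1 * c 0%N.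
Proof.
rewrite (expand_det_row _ ord0) (bigD1 ord_max) //= big1 ?addr0; last first.
  move=> j hj; rewrite !mxE /=.
  have -> : (j < m)%N.
    have := ltn_ord j; rewrite ltnS leq_eqVlt => /orP [/eqP Hj|] //.
    by case/negP: hj; apply/eqP/val_inj.
  by rewrite mul0r.
rewrite !mxE /= ltnn /cofactor add0n.
have -> : row' ord0 (col' ord_max (compmx m c)) = 1%:M.
  apply/matrixP => i j; rewrite !mxE lift_max lift0 ltn_ord.
  by [].
rewrite det1 mulr1 exprS; ring.
Qed.

Lemma hank_shift m (s c : nat -> int) :
  (forall N, s (N + m.+1)%N = - \sum_(l < m.+1) c l * s (N + l)%N) ->
  forall n, hank m.+1 s n.+1 = hank m.+1 s n *m compmx m c.
Proof.
move=> hs n; apply/matrixP => i j; rewrite /hank /compmx !mxE.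
under eq_bigr do rewrite !mxE.
have [hj|hj] := boolP (j < m)%N.

  rewrite (@sum_delta _ (fun l => s (n + i + l)%N) j.+1) ?ltnS //; congr s; lia.
under eq_bigr do rewrite mulrN mulrC.
rewrite sumrN -hs; congr s.
have := ltn_ord j; move: hj; rewrite ltnS; lia.
Qed.

Lemma det_hank_shift m (s c : nat -> int) :
  (forall N, s (N + m.+1)%N = - \sum_(l < m.+1) c l * s (N + l)%N) ->
  forall n, \det (hank m.+1 s n.+1) = (-1) ^+ m.+1 * c 0%N * \det (hank m.+1 s n).
Proof.
by move=> hs n; rewrite (@hank_shift m s c hs) det_mulmx det_compmx mulrC.
Qed.


Lemma rel_gen K j : (2 * j.+1 <= K)%N ->
  (forall h, (h <= K)%N -> (if h is h'.+1 then tent K j.+1 h' else 0) +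
     (if (h < K)%N then tent K j.+1 h.+1 else 0) - tent K j h = tent K j h) ->
  forall N h, (h <= K)%N -> qs j.+2 (fun M => g K M h) N = qs j (fun M => g K M h) N.
Proof.
move=> hK hsat.
apply: (@isA_unique K (fun N h => qs j.+2 (fun M => g K M h) N) (fun N h => qs j (fun M => g K M h) N)).
- exact: isA_qs (isA_g K).
- exact: isA_qs (isA_g K).
move=> h hh /=.
rewrite qs_rec (@isA_qs K (g K) j.+1 (isA_g K) 0%N h hh) /=.
rewrite (@tent_qs K j h) //; last lia.
rewrite -[RHS](hsat h hh).
congr (_ + _ - _).
  case: h hh => [|h] hh //; rewrite tent_qs //; lia.
case: ifP => // H; rewrite tent_qs //; lia.
Qed.

Lemma rel1 m N h : (h <= 4 * m.+1)%N ->
  qs (2 * m).+3 (fun M => g (4 * m.+1) M h) N = qs (2 * m).+1 (fun M => g (4 * m.+1) M h) N.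
Proof.
apply: rel_gen; first lia.
move=> {}h hh; rewrite /tent; case: h hh => [|h] hh /=; (try case: ifP => H); lia.
Qed.

Lemma rel2 m N h : (h <= (4 * m).+2)%N ->
  qs (2 * m).+2 (fun M => g (4 * m).+2 M h) N = qs (2 * m) (fun M => g (4 * m).+2 M h) N.
Proof.
apply: rel_gen; first lia.
move=> {}h hh; rewrite /tent; case: h hh => [|h] hh /=; (try case: ifP => H); lia.
Qed.

Lemma rec_from_qs (f : nat -> int) j1 j2 N : (j2 < j1)%N -> qs j1 f N = qs j2 f N ->
  f (N + j1)%N = - \sum_(l < j1) (qc j1 l - qc j2 l) * f (N + l)%N.
Proof.
move=> hj; rewrite (@qs_widen j2 f N j1) // /qs big_ord_recr /= qc_diag mul1r => H.
under eq_bigr do rewrite mulrBl.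
rewrite sumrB; move: H; set A := \sum_(i < j1) _; set B := \sum_(i < j1) _ => H.
have -> : f (N + j1)%N = B - A by rewrite -H; ring.
ring.
Qed.

Lemma seq2 m N :
  g (4 * m).+2 (N + (2 * m).+2) 0 =
  - \sum_(l < (2 * m).+2) (qc (2 * m).+2 l - qc (2 * m) l) * g (4 * m).+2 (N + l)%N 0.
Proof.
apply: (@rec_from_qs (fun M => g (4 * m).+2 M 0%N)) => //.
exact: rel2.
Qed.

Lemma seq1 m N :
  g (4 * m.+1) (N + (2 * m).+2).+1 0 =
  - \sum_(l < (2 * m).+2) (qc (2 * m).+3 l.+1 - qc (2 * m).+1 l.+1) * g (4 * m.+1) (N + l)%N.+1 0.
Proof.
have := @rec_from_qs (fun M => g (4 * m.+1) M 0%N) (2 * m).+3 (2 * m).+1 N (ltnW (ltnSn _)) (@rel1 m N 0%N (leq0n _)).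
rewrite big_ord_recl.
have -> : qc (2 * m).+3 0 = 0 by rewrite (_ : (2 * m).+3 = (m.+1).*2.+1) ?qc_odd0 // doubleS mul2n.
have -> : qc (2 * m).+1 0 = 0 by rewrite mul2n qc_odd0.
rewrite subrr mul0r add0r => H.
rewrite (_ : (N + (2 * m).+2).+1 = N + (2 * m).+3)%N ?H; last lia.
congr (- _); apply: eq_bigr => l _; rewrite lift0 addnS //.
Qed.


Definition qc2 i l : int := qc i l - (if i is i'.+1 then qc i' l else 0).
Definition qs2 j f N : int := qs j f N - (if j is j'.+1 then qs j' f N else 0).

Lemma qs2_widen j f N p : (j < p)%N -> \sum_(l < p) qc2 j l * f (N + l)%N = qs2 j f N.
Proof.
move=> hp; rewrite /qs2 /qc2 (@qs_widen j f N p) //.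
case: j hp => [|j] hp; first by under eq_bigr do rewrite subr0; rewrite subr0.
rewrite (@qs_widen j f N p); last lia.
by under eq_bigr do rewrite mulrBl; rewrite sumrB.
Qed.

Lemma isA_zero K : isA K (fun _ _ => 0).
Proof. by move=> N h hh; case: h hh => [|h] hh; case: ifP => _; rewrite ?addr0. Qed.

Lemma isA_ext K V1 V2 : (forall N h, V1 N h = V2 N h) -> isA K V1 -> isA K V2.
Proof.
move=> E h1 N h hh; rewrite -E h1 //.
by case: h hh => [|h] hh; rewrite ?E //; case: ifP => _; rewrite ?E.
Qed.

Lemma isA_qs2 K V j : isA K V -> isA K (fun N h => qs2 j (fun M => V M h) N).
Proof.
move=> hV; rewrite /qs2; case: j => [|j].
  apply: (@isA_ext K (fun N h => qs 0 (fun M => V M h) N)); first by move=> *; rewrite subr0.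
  exact: (@isA_qs K V 0 hV).
exact: (@isA_sub K _ _ (@isA_qs K V j.+1 hV) (@isA_qs K V j hV)).
Qed.

Lemma rowtr2 K V i : (0 < K)%N -> isA K V -> (i <= K)%N ->
  qs2 i (fun N => V N 0%N) 0 = V 0%N i - (if i is i'.+1 then V 0%N i' else 0).
Proof.
move=> hK hV hi; rewrite /qs2 (@rowtr K hK i V hV hi); case: i hi => [|i] hi //.
by rewrite (@rowtr K hK i V hV) //; lia.
Qed.

Definition Q2 p : 'M[int]_p := \matrix_(i < p, l < p) qc2 i l.

Lemma det_Q2 p : \det (Q2 p) = 1.
Proof.
rewrite det_trig.
  apply: big1 => i _; rewrite mxE /qc2 qc_diag.
  by case: (nat_of_ord i) => [|i'] //; rewrite qc_gt ?subr0.
apply/is_trig_mxP => i j hij; rewrite mxE /qc2 qc_gt //.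
by case: (nat_of_ord i) hij => [|i'] hij; rewrite ?subr0 // qc_gt ?subr0 //; lia.
Qed.

Lemma base_entry K (G : nat -> nat -> int) p (i j : 'I_p) : isA K G -> (0 < K)%N -> (p <= K.+1)%N ->
  (Q2 p *m hank p (fun M => G M 0%N) 0 *m (Q2 p)^T) i j =
  qs2 j (fun M => G M i) 0 - (if nat_of_ord i is i'.+1 then qs2 j (fun M => G M i') 0 else 0).
Proof.
move=> hG hK hp; rewrite !mxE.
under eq_bigr do rewrite !mxE mulr_suml.
rewrite exchange_big /=.
under eq_bigr => l _.
  under eq_bigr do rewrite !mxE -mulrA.
  rewrite -mulr_sumr.
  under eq_bigr do rewrite mulrC.
  rewrite (@qs2_widen j (fun M => G M 0%N) l p) //.
over.
rewrite /= (@qs2_widen i (fun N => qs2 j (fun M => G M 0%N) N) 0 p) //.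
rewrite (@rowtr2 K (fun N h => qs2 j (fun M => G M h) N)) //.
- exact: isA_qs2.
- have := ltn_ord i; lia.
Qed.


Lemma qs2_tent K j h : (2 * j <= K)%N -> (h <= K)%N ->
  qs2 j (fun M => g K M h) 0 = tent K j h - (if j is j'.+1 then tent K j' h else 0).
Proof.
move=> hj hh; rewrite /qs2 tent_qs //; case: j hj => [|j] hj //.
by rewrite tent_qs //; lia.
Qed.

Lemma ent2 m (i j : nat) : (i < (2 * m).+2)%N -> (j < (2 * m).+2)%N ->
  let K := (4 * m).+2 in
  (tent K j i - (if j is j'.+1 then tent K j' i else 0)) -
  (if i is i'.+1 then tent K j i' - (if j is j'.+1 then tent K j' i' else 0) else 0)
  = ((i == j) : nat)%:R.
Proof.
move=> hi hj K; rewrite /K /tent.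
case: (i =P j) => H; case: i H hi => [|i] H hi; case: j H hj => [|j] H hj /=; lia.
Qed.

Lemma base2 m : \det (hank (2 * m).+2 (fun M => g (4 * m).+2 M 0%N) 0) = 1.
Proof.
have E : Q2 (2 * m).+2 *m hank (2 * m).+2 (fun M => g (4 * m).+2 M 0%N) 0 *m (Q2 (2 * m).+2)^T = 1%:M.
  apply/matrixP => i j.
  rewrite (@base_entry (4 * m).+2 (g (4 * m).+2) (2 * m).+2 i j (isA_g _)) //; last by lia.
  rewrite [RHS]mxE.
  have hi := ltn_ord i; have hj := ltn_ord j.
  rewrite -(@ent2 m i j) //.
  rewrite (@qs2_tent (4 * m).+2 j i); try lia.
  case: (nat_of_ord i) hi => [|i'] hi //.
  rewrite qs2_tent //; lia.
move/(congr1 determinant): E; rewrite !det_mulmx det_tr det_Q2 det1.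
by rewrite mul1r mulr1.
Qed.

Definition Td K j h : int := tent K j h - (if j is j'.+1 then tent K j' h else 0).
Definition Fd K j h : int := (if h is h'.+1 then Td K j h' else 0) + (if (h < K)%N then Td K j h.+1 else 0).

Lemma qs2_tent1 K j h : (2 * j <= K)%N -> (h <= K)%N ->
  qs2 j (fun M => g K M.+1 h) 0 = Fd K j h.
Proof.
move=> hj hh.
transitivity (qs2 j (fun M => g K M h) 1).
  by rewrite /qs2 !qs_shift.
rewrite (@isA_qs2 K (g K) j (isA_g K) 0 h hh) /Fd /=.
case: h hh => [|h] hh.
  by case: ifP => // H; rewrite qs2_tent.
rewrite qs2_tent //; last lia.
by case: ifP => // H; rewrite qs2_tent.
Qed.

Lemma ent1 m (i j : nat) : (i < (2 * m).+2)%N -> (j < (2 * m).+2)%N ->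
  Fd (4 * m.+1) j i - (if i is i'.+1 then Fd (4 * m.+1) j i' else 0) =
  ((((i == 0%N) && (j == 0%N)) + (i == j.+1) + (j == i.+1))%N)%:R.
Proof.
move=> hi hj; rewrite /Fd /Td /tent.
case: (i =P j.+1) => H1; case: (j =P i.+1) => H2;
case: i H1 H2 hi => [|[|i]] H1 H2 hi; case: j H1 H2 hj => [|j] H1 H2 hj /=;
do ?[case: ifP => ?]; lia.
Qed.


Definition Ymx p : 'M[int]_p := \matrix_(i < p, j < p)
  ((((i == 0%N :> nat) && (j == 0%N :> nat)) + (i == j.+1 :> nat) + (j == i.+1 :> nat))%N)%:R.

Lemma det_Ymx_step m : \det (Ymx m.+2) = - \det (Ymx m).
Proof.
have hm : (m < m.+2)%N by [].
rewrite (expand_det_row _ ord_max) (bigD1 (Ordinal hm)) //= big1 ?addr0; last first.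
  move=> j hj; rewrite !mxE /=.
  have : (j != m :> nat) by apply: contra hj => /eqP H; apply/eqP/val_inj.
  have := ltn_ord j.
  by case: (nat_of_ord j =P m.+1) => ?; case: (m.+1 =P j.+1) => ?; case: (nat_of_ord j =P m.+2) => ? ; rewrite ?andbF /= ?mul0r //; lia.
rewrite !mxE /= eqxx (_ : (m == m.+2) = false); last by case: (m =P m.+2) => // H; lia.
rewrite /= mul1r /cofactor /=.
set M1 := row' _ _.
rewrite (expand_det_col _ ord_max) (bigD1 ord_max) //= big1 ?addr0; last first.
  move=> i hi; rewrite /M1 !mxE /=.
  have : (i != m :> nat) by apply: contra hi => /eqP H; apply/eqP/val_inj.
  have := ltn_ord i; rewrite /bump /=.
  case: (nat_of_ord i =P 0%N) => ?; case: (nat_of_ord i =P m.+2) => ?; case: (m.+1 =P i.+1) => ?;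
    rewrite ?andbF ?andFb /= ?mul0r //; try lia.
have -> : M1 ord_max ord_max = 1.
  rewrite /M1 !mxE /= /bump /= ltnn leqnn add0n add1n andbF eqxx.
  by rewrite (_ : (m == m.+2) = false) //; case: (m =P m.+2) => // H; lia.
rewrite /cofactor mul1r.
have -> : row' ord_max (col' ord_max M1) = Ymx m.
  apply/matrixP => i j; rewrite /M1 !mxE /= /bump /=.
  have hi := ltn_ord i; have hj := ltn_ord j.
  have Hi : (m <= i)%N = false by move: hi => /=; lia.
  have Hi' : (m < i)%N = false by move: hi => /=; lia.
  have Hj : (m <= j)%N = false by move: hj => /=; lia.
  by rewrite !Hi !Hj !add0n ?Hi' ?Hj.
rewrite mulrA -exprD (_ : (m.+1 + m + (m + m))%N = (2 * (2 * m)).+1) ?exprS ?exprM ?sqrr_sign; last lia.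
by rewrite expr1n mulr1 mulN1r.
Qed.

Lemma det_Ymx m : \det (Ymx (2 * m).+2) = (-1) ^+ m.+1.
Proof.
elim: m => [|m IH]; first by rewrite det_Ymx_step det_mx00 expr1.
rewrite mulnS det_Ymx_step.
by rewrite (IH : \det (Ymx (2 + 2 * m)) = _) [in RHS]exprS mulN1r.
Qed.

Lemma base1 m : \det (hank (2 * m).+2 (fun M => g (4 * m.+1) M.+1 0%N) 0) = (-1) ^+ m.+1.
Proof.
have E : Q2 (2 * m).+2 *m hank (2 * m).+2 (fun M => g (4 * m.+1) M.+1 0%N) 0 *m (Q2 (2 * m).+2)^T
   = Ymx (2 * m).+2.
  apply/matrixP => i j.
  rewrite (@base_entry (4 * m.+1) (fun N h => g (4 * m.+1) N.+1 h) (2 * m).+2 i j); last 3 first.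
  - exact: isA_shift (isA_g _).
  - lia.
  - lia.
  rewrite [RHS]mxE.
  have hi := ltn_ord i; have hj := ltn_ord j.
  rewrite -(@ent1 m i j) //.
  rewrite (@qs2_tent1 (4 * m.+1) j i); try lia.
  case: (nat_of_ord i) hi => [|i'] hi //.
  rewrite qs2_tent1 //; lia.
move/(congr1 determinant): E; rewrite !det_mulmx det_tr det_Q2 det_Ymx.
by rewrite mul1r mulr1.
Qed.


Definition cnt K N h : nat := (\sum_(p : N.-tuple bool) (walk K h p != None))%N.

Lemma walk_le K h (p : seq bool) e : (h <= K)%N -> walk K h p = Some e -> (e <= K)%N.
Proof.
elim: p h => [|b p IH] h hh /=; first by case=> <-.
case: b; case: ifP => H // ; apply: IH; lia.
Qed.

Lemma sum_tuple_S N (F : N.+1.-tuple bool -> nat) :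
  (\sum_(p : N.+1.-tuple bool) F p = \sum_(t : N.-tuple bool) F [tuple of true :: t] +
     \sum_(t : N.-tuple bool) F [tuple of false :: t])%N.
Proof.
rewrite (reindex (fun x : bool * N.-tuple bool => [tuple of x.1 :: x.2])) /=; last first.
  exists (fun p : N.+1.-tuple bool => (thead p, [tuple of behead p])).
    by move=> [b t] _ /=; congr pair; apply: val_inj.
  by move=> p _; rewrite [RHS]tuple_eta.
rewrite -(pair_big xpredT xpredT (fun (b : bool) (t : N.-tuple bool) => F [tuple of b :: t])) /=.
by rewrite big_bool.
Qed.

Lemma cnt0 K h : cnt K 0 h = 1%N.
Proof.
rewrite /cnt (eq_bigr (fun _ => 1%N)); last by move=> p _; rewrite tuple0.
by rewrite sum1_card card_tuple.
Qed.

Lemma cntS K N h : cnt K N.+1 h =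
  ((if h is h'.+1 then cnt K N h' else 0) + (if (h < K)%N then cnt K N h.+1 else 0))%N.
Proof.
rewrite /cnt sum_tuple_S /= addnC; congr addn.
  case: h => [|h] /=; last by [].
  by rewrite big1.
by case: (boolP (h < K)%N) => H //; rewrite big1.
Qed.

Lemma g_cnt K N h : g K N h = (cnt K N h)%:R.
Proof.
elim: N h => [|N IH] h; first by rewrite cnt0.
rewrite cntS /= natrD; congr (_ + _).
  by case: h => [|h] //; rewrite IH.
by case: ifP => // _; rewrite IH.
Qed.

Lemma a_g N K : ((a N K)%:Z : int) = g K N 0.
Proof.
rewrite g_cnt natz /a /cnt; congr Posz.
have -> : (\sum_(0 <= s < K.+1) Cpaths N K s =
  \sum_(0 <= s < K.+1) \sum_(p : N.-tuple bool) (walk K 0 p == Some s))%N.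
  apply: eq_bigr => s _; rewrite /Cpaths -sum1_card big_mkcond /=.
  by apply: eq_bigr => p _; rewrite inE; case: ifP.
rewrite exchange_big /=; apply: eq_bigr => p _.
case E: (walk K 0 p) => [e|] /=.
  have he := @walk_le K 0 p e (leq0n K) E.
  rewrite big_mkord (bigD1 (Ordinal (_ : e < K.+1)%N)) //= eqxx big1 // => s hs.
  apply/eqP; rewrite eqb0; apply: contra hs => /eqP [] H; apply/eqP/val_inj => /=; by rewrite H.
by rewrite big1.
Qed.


Lemma D1 m n : \det (hank (2 * m).+2 (fun M => g (4 * m.+1) M.+1 0%N) n) =
  (-1) ^+ m.+1 * ((-1) ^+ m.+1 * (2 * m).+3%:R) ^+ n.
Proof.
elim: n => [|n IH]; first by rewrite base1 expr0 mulr1.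
rewrite (@det_hank_shift (2 * m).+1 (fun M => g (4 * m.+1) M.+1 0%N)
   (fun l => qc (2 * m).+3 l.+1 - qc (2 * m).+1 l.+1)); last first.
  move=> N; exact: seq1.
rewrite (_ : (-1) ^+ (2 * m).+2 = 1 :> int); last by rewrite (_ : (2 * m).+2 = 2 * m.+1)%N ?exprM ?sqrrN1 ?expr1n //; lia.
rewrite IH [_ ^+ n.+1]exprS.
have -> : qc (2 * m).+3 1 - qc (2 * m).+1 1 = (-1) ^+ m.+1 * (2 * m).+3%:R.
  rewrite (_ : (2 * m).+3 = (m.+1).*2.+1); last by rewrite doubleS mul2n.
  rewrite mul2n !qc_odd1 exprS.
  rewrite -[(m.+2)%:R]natr1 -[(m.+1)%:R]natr1 -[((m.*2).+3)%:R]natr1 -[((m.*2).+2)%:R]natr1.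
  rewrite -[((m.*2).+1)%:R]natr1 -muln2 natrM; ring.
ring.
Qed.

Lemma D2 m n : \det (hank (2 * m).+2 (fun M => g (4 * m).+2 M 0%N) n) =
  (2 * (-1) ^+ m.+1) ^+ n.
Proof.
elim: n => [|n IH]; first by rewrite base2 expr0.
rewrite (@det_hank_shift (2 * m).+1 (fun M => g (4 * m).+2 M 0%N)
   (fun l => qc (2 * m).+2 l - qc (2 * m) l)); last first.
  move=> N; exact: seq2.
rewrite (_ : (-1) ^+ (2 * m).+2 = 1 :> int); last by rewrite (_ : (2 * m).+2 = 2 * m.+1)%N ?exprM ?sqrrN1 ?expr1n //; lia.
rewrite IH [_ ^+ n.+1]exprS.
have -> : qc (2 * m).+2 0 - qc (2 * m) 0 = 2 * (-1) ^+ m.+1.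
  rewrite (_ : (2 * m).+2 = (m.+1).*2); last by rewrite doubleS mul2n.
  rewrite mul2n !qc_even0 exprS; ring.
ring.
Qed.


Theorem theorem51 (n k : nat) (hk : (1 <= k)%N) :
  \det (\matrix_(i < (2 * k)%N, j < (2 * k)%N)
          ((a (n + i + j + 1) (4 * k))%:Z : int))
    = (-1) ^ (k%:Z * (n%:Z - 1)) * (2 * k + 1)%:Z ^+ n
  /\
  \det (\matrix_(i < (2 * k)%N, j < (2 * k)%N)
          ((a (n + i + j) (4 * k - 2))%:Z : int))
    = (-1) ^+ (k * n) * 2 ^+ n.
Proof.
case: k hk => [//|m] _.
rewrite (mulnS 2 m).
split.
  have -> : \matrix_(i < (2 + 2 * m)%N, j < (2 + 2 * m)%N) ((a (n + i + j + 1) (4 * m.+1))%:Z : int)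
     = hank (2 * m).+2 (fun M => g (4 * m.+1) M.+1 0%N) n.
    by apply/matrixP => i j; rewrite !mxE a_g addn1.
  rewrite D1.
  have -> : ((2 + 2 * m + 1)%N : int) = (2 * m).+3%:R by rewrite natz; congr Posz; lia.
  rewrite exprMn mulrA -exprS; congr (_ * _).
  case: n => [|n].
    have -> : (m.+1%:Z * (0%:Z - 1)) = Negz m by rewrite NegzE; lia.
    by rewrite expr1 -invr_sign.
  have -> : (m.+1%:Z * (n.+1%:Z - 1)) = (m.+1 * n)%N%:Z by lia.
  rewrite /= -exprM (_ : (m.+1 * n.+2) = m.+1 * n + 2 * m.+1)%N; last lia.
  by rewrite exprD (exprM (-1) 2 m.+1) (_ : (-1) ^+ 2 = 1 :> int) ?expr1n ?mulr1 // expr2 mulN1r opprK.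
have -> : \matrix_(i < (2 + 2 * m)%N, j < (2 + 2 * m)%N) ((a (n + i + j) (4 * m.+1 - 2))%:Z : int)
     = hank (2 * m).+2 (fun M => g (4 * m).+2 M 0%N) n.
  apply/matrixP => i j; rewrite !mxE a_g.
  by rewrite (_ : (4 * m.+1 - 2 = (4 * m).+2)%N) //; lia.
by rewrite D2 exprMn -exprM mulrC.
Qed.
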